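(* Let $\widehat D=(Q,\widehat\Sigma,q_0,\delta,F)$ be as in the context and let $\mathcal A=(Q,\Sigma,q_0,\delta_0,\delta_1,F)$ be defined as follows: for $q\in Q$, $\sigma\in\Sigma$, $c\in\{0,1\}$, if $\delta(q,\sigma^c)=q'$ is defined, then $\delta_c(q,\sigma)=(q',\mathit{act}|_\sigma)$, where $\mathit{act}\in\Sigma_{\mathsf{Act}}$ is any letter with $\mathit{act}[0]=c$, $\delta(q,\mathit{act})$ defined and $\mathit{act}|_\sigma\neq\bot$; otherwise $\delta_c(q,\sigma)$ is undefined. Then such an $\mathit{act}$ always exists, the value $\mathit{act}|_\sigma$ does not depend on the choice of $\mathit{act}$ (so $\delta_0,\delta_1$ are well defined, with $\delta_0$ using only counter updates in $\{0,+1\}$), and $\mathcal A$ is a (partial) deterministic real-time one-counter automaton consistent with the sample: for every $w\in\mathrm{pref}(\mathcal S)$ the run of $\mathcal A$ on $w$ exists and its counter-effect equals $\mathsf{ce}(w)$, every word of $\mathcal S^+$ is accepted by $\mathcal A$, and every word of $\mathcal S^-$ is rejected by $\mathcal A$.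
   Context: Let $\Sigma=\{\sigma_1,\dots,\sigma_k\}$ be a finite alphabet. A sample set is a pair of finite sets of words $\mathcal S^+,\mathcal S^-\subseteq\Sigma^*$ with $\mathcal S^+\cap\mathcal S^-=\emptyset$; write $\mathcal S=\mathcal S^+\cup\mathcal S^-$ and $\mathrm{pref}(\mathcal S)$ for the set of all prefixes (including $\varepsilon$ and the words themselves) of words of $\mathcal S$. We are given $\mathsf{ce}:\mathrm{pref}(\mathcal S)\to\mathbb N$ with $\mathsf{ce}(\varepsilon)=0$ and $\mathsf{ce}(w\sigma)-\mathsf{ce}(w)\in\{-1,0,+1\}$ whenever $w\sigma\in\mathrm{pref}(\mathcal S)$, $\sigma\in\Sigma$. For $d\in\mathbb N$, $\mathrm{sgn}(d)=0$ if $d=0$ and $1$ otherwise. For $w\in\mathrm{pref}(\mathcal S)$ define $\mathsf{Act}(w)\in\{0,1\}\times\{0,+1,-1,\bot\}^k$ by $\mathsf{Act}(w)[0]=\mathrm{sgn}(\mathsf{ce}(w))$ and, for $i\in[1,k]$, $\mathsf{Act}(w)[i]=\mathsf{ce}(w\sigma_i)-\mathsf{ce}(w)$ if $w\sigma_i\in\mathrm{pref}(\mathcal S)$, and $\mathsf{Act}(w)[i]=\bot$ otherwise. For a tuple $\mathit{act}$ of this shape, $\mathit{act}|_{\sigma_i}$ denotes $\mathit{act}[i]$. Two such tuples $x,y$ are similar, $x\sim y$, if either $x[0]\neq y[0]$, or for all $i\in[1,k]$: $x[i]=\bot$ or $y[i]=\bot$ or $x[i]=y[i]$; otherwise $x\not\sim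 y$. Let $\widetilde\Sigma=\{\sigma^0,\sigma^1:\sigma\in\Sigma\}$ (fresh letters). For $w\in\mathrm{pref}(\mathcal S)$, $\mathsf{Enc}(\varepsilon)=\varepsilon$ and $\mathsf{Enc}(w)$ is the word over $\widetilde\Sigma$ of the same length with $\mathsf{Enc}(w)[0]=w[0]^0$ and $\mathsf{Enc}(w)[i]=w[i]^{\mathrm{sgn}(\mathsf{ce}(w[0\cdots i-1]))}$ for $i>0$ (positions indexed from $0$). Let $\Sigma_{\mathsf{Act}}=\{\mathsf{Act}(w):w\in\mathrm{pref}(\mathcal S)\}$, viewed as a set of fresh letters, and $\widehat\Sigma=\widetilde\Sigma\cup\Sigma_{\mathsf{Act}}$. The enriched sample over $\widehat\Sigma$ is: $\widehat{\mathcal S}^+=\{\mathsf{Enc}(w):w\in\mathcal S^+\}\cup\{\mathsf{Enc}(w)\cdot\mathsf{Act}(w):w\in\mathrm{pref}(\mathcal S)\}$ and $\widehat{\mathcal S}^-=\{\mathsf{Enc}(w):w\in\mathcal S^-\}\cup\{\mathsf{Enc}(w)\cdot\mathit{op}:w\in\mathrm{pref}(\mathcal S),\ \mathit{op}\in\Sigma_{\mathsf{Act}},\ \mathit{op}\not\sim\mathsf{Act}(w)\}$. $\widehat D=(Q,\widehat\Sigma,q_0,\delta,F)$ is a deterministic finite automaton with possibly partial transition function $\delta$ (a word is accepted iff its run exists and ends in $F$) such that: (i) $\widehat D$ accepts every word of $\widehat{\mathcal S}^+$ and rejects every word of $\widehat{\mathcal S}^-$; (ii) every transition comes from a prefix of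 a positive sample: whenever $\delta(q,x)=q'$ with $x\in\widehat\Sigma$, there is a word $u$ with $ux\in\mathrm{pref}(\widehat{\mathcal S}^+)$ and $\delta(q_0,u)=q$. (These properties hold e.g. for the output of the RPNI algorithm.) A deterministic real-time one-counter automaton (DROCA) is $\mathcal A=(Q,\Sigma,q_0,\delta_0,\delta_1,F)$ with (here possibly partial) maps $\delta_0:Q\times\Sigma\to Q\times\{0,+1\}$ and $\delta_1:Q\times\Sigma\to Q\times\{0,+1,-1\}$. Configurations are pairs $(p,n)\in Q\times\mathbb N$; there is a step $(p,n)\xrightarrow{a}(q,n+e)$ iff $\delta_{\mathrm{sgn}(n)}(p,a)=(q,e)$. The run on $w$ starts at $(q_0,0)$; if it exists and ends in $(q,m)$, then $m$ is the counter-effect $\mathsf{ce}_{\mathcal A}(w)$ and $w$ is accepted iff $q\in F$; otherwise $w$ is rejected. *)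

(* Defs.v *)
From HB Require Import structures.
From mathcomp Require Import all_boot all_order all_algebra.
Set Implicit Arguments. Unset Strict Implicit. Unset Printing Implicit Defensive.
Import GRing.Theory Num.Theory.

Section Sample.
Variable Sigma : finType.
Variables (Sp Sm : seq (seq Sigma)).
Variable ce : seq Sigma -> nat.        (* only its values on pref(S) matter *)

Definition inpref (w : seq Sigma) : bool := has (prefix w) (Sp ++ Sm).

(* sgn(d) as a bit: false = 0, true = 1 *)
Definition sgnb (d : nat) : bool := d != 0%N.

(* A tuple in {0,1} x {0,+1,-1,bot}^k : the first component and a finite map
   Sigma -> option int (None = bot). *)
Definition actT := (bool * {ffun Sigma -> option int})%type.

Definition Act (w : seq Sigma) : actT :=
  (sgnb (ce w),
   [ffun a => if inpref (rcons w a)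
              then Some ((ce (rcons w a))%:Z - (ce w)%:Z)%R else None]).

Definition similar (x y : actT) : Prop :=
  x.1 <> y.1 \/ forall a, x.2 a = None \/ y.2 a = None \/ x.2 a = y.2 a.

(* Letters of the enriched alphabet: inl (s, c) is s^c, inr act is act. *)
Definition hatT := ((Sigma * bool) + actT)%type.

(* enc_aux p w : encoding of the suffix w of a word whose already read part is p;
   position 0 gets bit 0, position i > 0 gets sgn(ce(prefix of length i)). *)
Fixpoint enc_aux (p w : seq Sigma) : seq hatT :=
  match w with
  | [::] => [::]
  | a :: w' => inl (a, if p is [::] then false else sgnb (ce p))
                 :: enc_aux (rcons p a) w'
  end.

Definition Enc (w : seq Sigma) : seq hatT := enc_aux [::] w.

Definition inSigmaAct (x : actT) : Prop := exists2 w, inpref w & x = Act w.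

Definition Shat_pos (u : seq hatT) : Prop :=
  (exists2 w, w \in Sp & u = Enc w) \/
  (exists2 w, inpref w & u = rcons (Enc w) (inr (Act w))).

Definition Shat_neg (u : seq hatT) : Prop :=
  (exists2 w, w \in Sm & u = Enc w) \/
  (exists w op, [/\ inpref w, inSigmaAct op, ~ similar op (Act w)
                  & u = rcons (Enc w) (inr op)]).

End Sample.

Fixpoint drun (Q X : Type) (d : Q -> X -> option Q) (q : Q) (u : seq X)
  : option Q :=
  match u with
  | [::] => Some q
  | x :: u' => match d q x with Some q' => drun d q' u' | None => None end
  end.

Definition daccepts (Q : finType) (X : Type) (d : Q -> X -> option Q) (q0 : Q)
  (F : {set Q}) (u : seq X) : bool :=
  if drun d q0 u is Some q then q \in F else false.

Definition ostep (Q Sigma : Type) (d0 d1 : Q -> Sigma -> option (Q * int))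
  (c : Q * nat) (a : Sigma) : option (Q * nat) :=
  let: (p, n) := c in
  match (if n == 0%N then d0 else d1) p a with
  | Some (q, e) => if (0 <= n%:Z + e)%R then Some (q, absz (n%:Z + e)%R) else None
  | None => None
  end.

Fixpoint orun (Q Sigma : Type) (d0 d1 : Q -> Sigma -> option (Q * int))
  (c : Q * nat) (w : seq Sigma) : option (Q * nat) :=
  match w with
  | [::] => Some c
  | a :: w' => match ostep d0 d1 c a with
               | Some c' => orun d0 d1 c' w'
               | None => None
               end
  end.

Definition oaccepts (Q : finType) (Sigma : Type)
  (d0 d1 : Q -> Sigma -> option (Q * int)) (q0 : Q) (F : {set Q})
  (w : seq Sigma) : bool :=
  if orun d0 d1 (q0, 0%N) w is Some (q, _) then q \in F else false.

(* Main.v *)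
Require Import Defs.
From HB Require Import structures.
From mathcomp Require Import all_boot all_order all_algebra zify.
Import GRing.Theory Num.Theory.

Lemma enc_rcons (Sigma : finType) (ce : seq Sigma -> nat) (w : seq Sigma) a :
  ce [::] = 0%N ->
  Enc ce (rcons w a) = rcons (Enc ce w) (inl (a, sgnb (ce w))).
Proof.
move=> ce0; rewrite /Enc.
have H : forall p, enc_aux ce p (rcons w a) =
   rcons (enc_aux ce p w) (inl (a, if p ++ w is [::] then false else sgnb (ce (p ++ w)))).
  elim: w => [|b w IH] p /=; first by rewrite cats0.
  by rewrite IH cat_rcons.
rewrite H /=; case: w {H} => //=; by rewrite ce0.
Qed.

Lemma take_enc (Sigma : finType) (ce : seq Sigma -> nat) n (w p : seq Sigma) :
  take n (enc_aux ce p w) = enc_aux ce p (take n w).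
Proof. elim: w n p => [|b w IH] [|n] p //=; by rewrite IH. Qed.

Lemma size_enc (Sigma : finType) (ce : seq Sigma -> nat) (w p : seq Sigma) :
  size (enc_aux ce p w) = size w.
Proof. by elim: w p => [|b w IH] p //=; rewrite IH. Qed.

Definition isl (X Y : Type) (x : X + Y) := if x is inl _ then true else false.

Lemma all_enc (Sigma : finType) (ce : seq Sigma -> nat) (w p : seq Sigma) :
  all (@isl _ _) (enc_aux ce p w).
Proof. by elim: w p => [|b w IH] p //=. Qed.

Lemma prefix_rcons_inv (T : eqType) (s t : seq T) x :
  prefix s (rcons t x) -> prefix s t \/ s = rcons t x.
Proof.
rewrite prefixE => /eqP <-.
case: (leqP (size s) (size t)) => h.
  by left; rewrite -cats1 takel_cat // prefix_take.
right; rewrite take_oversize //; by rewrite size_rcons.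
Qed.

Lemma prefix_enc (Sigma : finType) (ce : seq Sigma -> nat) u a c w :
  ce [::] = 0%N ->
  prefix (rcons u (inl (a, c))) (Enc ce w) ->
  exists x, [/\ u = Enc ce x, c = sgnb (ce x) & prefix (rcons x a) w].
Proof.
move=> ce0; rewrite prefixE => /eqP.
rewrite /Enc take_enc.
have Ht := prefix_take w (size (rcons u (inl (a, c)))).
move: Ht; set t := take _ w => Ht E.
have Hs : size t = size (rcons u (inl (a,c))) by rewrite -E size_enc.
move: Ht E Hs; case/lastP: t => [|x b] Ht E Hs.
  by rewrite size_rcons in Hs.
move: E; rewrite -/(Enc ce (rcons x b)) enc_rcons //.
move=> /rcons_inj [<- <- <-]; exists x; split => //.
Qed.

Lemma drun_rcons (Q X : Type) (d : Q -> X -> option Q) q u x :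
  drun d q (rcons u x) = match drun d q u with Some q' => d q' x | None => None end.
Proof.
elim: u q => [|y u IH] q /=; first by case: (d q x).
by case: (d q y).
Qed.

Lemma orun_rcons (Q Sigma : Type) (d0 d1 : Q -> Sigma -> option (Q * int)) c w a :
  orun d0 d1 c (rcons w a) =
  match orun d0 d1 c w with Some c' => ostep d0 d1 c' a | None => None end.
Proof.
elim: w c => [|y w IH] c /=; first by case: ostep.
by case: ostep.
Qed.

Lemma prefix_enc_inr (Sigma : finType) (ce : seq Sigma -> nat) u z p w :
  prefix (rcons u (inr z)) (enc_aux ce p w) -> False.
Proof.
case/prefixP => s E; have := all_enc _ ce w p.
by rewrite E all_cat all_rcons.
Qed.

Arguments prefix_enc {Sigma ce u a c w}.
Arguments prefix_enc_inr {Sigma ce u z p w}.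
Arguments prefix_rcons_inv {T s t x}.
Arguments enc_rcons {Sigma ce w a}.

Theorem lemma3 (Sigma : finType) (Sp Sm : seq (seq Sigma))
  (ce : seq Sigma -> nat)
  (Q : finType) (q0 : Q) (d : Q -> hatT Sigma -> option Q) (F : {set Q}) :
  (* sample set and counter-effect function *)
  (forall w, w \in Sp -> w \notin Sm) ->
  ce [::] = 0%N ->
  (forall (w : seq Sigma) (a : Sigma), inpref Sp Sm (rcons w a) ->
     ((ce (rcons w a))%:Z - (ce w)%:Z)%R \in [:: (-1)%R; 0%R; 1%R]) ->
  (* (i) consistency of the DFA with the enriched sample *)
  (forall u, Shat_pos Sp Sm ce u -> daccepts d q0 F u) ->
  (forall u, Shat_neg Sp Sm ce u -> ~~ daccepts d q0 F u) ->
  (* (ii) every transition comes from a prefix of a positive sample *)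
  (forall q x q', d q x = Some q' ->
     exists u, (exists2 v, Shat_pos Sp Sm ce v & prefix (rcons u x) v)
               /\ drun d q0 u = Some q) ->
  [/\
   (* such an act always exists *)
   (forall q a (c : bool) q', d q (inl (a, c)) = Some q' ->
      exists act : actT Sigma,
        [/\ inSigmaAct Sp Sm ce act, act.1 = c, d q (inr act) <> None
          & act.2 a <> None]),
   (* act|_sigma does not depend on the choice of act *)
   (forall q a (c : bool) q' (act act' : actT Sigma),
      d q (inl (a, c)) = Some q' ->
      inSigmaAct Sp Sm ce act -> act.1 = c -> d q (inr act) <> None ->
      act.2 a <> None ->
      inSigmaAct Sp Sm ce act' -> act'.1 = c -> d q (inr act') <> None ->
      act'.2 a <> None ->
      act.2 a = act'.2 a) &
   (* any d0, d1 built as described form a DROCA consistent with the sample *)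
   (forall d0 d1 : Q -> Sigma -> option (Q * int),
      (forall q a (c : bool),
         (forall q', d q (inl (a, c)) = Some q' ->
            exists (act : actT Sigma) (e : int),
              [/\ inSigmaAct Sp Sm ce act, act.1 = c, d q (inr act) <> None,
                  act.2 a = Some e
                & (if c then d1 else d0) q a = Some (q', e)]) /\
         (d q (inl (a, c)) = None -> (if c then d1 else d0) q a = None)) ->
      [/\ (forall q a q' e, d0 q a = Some (q', e) -> e \in [:: 0%R; 1%R]),
          (forall q a q' e, d1 q a = Some (q', e) -> e \in [:: 0%R; 1%R; (-1)%R]),
          (forall w, inpref Sp Sm w ->
             exists q, orun d0 d1 (q0, 0%N) w = Some (q, ce w)),
          (forall w, w \in Sp -> oaccepts d0 d1 q0 F w)
        & (forall w, w \in Sm -> ~~ oaccepts d0 d1 q0 F w)])].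
Proof.
move=> _ ce0 Hce Hpos Hneg Hii.
have pref_rc : forall w a, inpref Sp Sm (rcons w a) -> inpref Sp Sm w.
  move=> w a /hasP [v Hv Hp]; apply/hasP; exists v => //.
  by apply: prefix_trans Hp; exact: prefix_rcons.
have pref_of : forall x w, prefix x w -> inpref Sp Sm w -> inpref Sp Sm x.
  move=> x w Hxw /hasP [v Hv Hp]; apply/hasP; exists v => //.
  exact: prefix_trans Hp.
have inSp : forall w, w \in Sp -> inpref Sp Sm w.
  by move=> w Hw; apply/hasP; exists w; rewrite ?mem_cat ?Hw ?prefix_refl.
have inSm : forall w, w \in Sm -> inpref Sp Sm w.
  by move=> w Hw; apply/hasP; exists w; rewrite ?mem_cat ?Hw ?orbT ?prefix_refl.
have B : forall w, inpref Sp Sm w -> exists2 q, drun d q0 (Enc ce w) = Some q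
            & d q (inr (Act Sp Sm ce w)) <> None.
  move=> w Hw.
  have := Hpos (rcons (Enc ce w) (inr (Act Sp Sm ce w)))
                (or_intror (ex_intro2 _ _ w Hw erefl)).
  rewrite /daccepts drun_rcons; case: (drun d q0 (Enc ce w)) => [q|] //.
  by case E: (d q _) => [q'|] // _; exists q; rewrite ?E.
have A : forall q op q', d q (inr op) = Some q' -> exists w,
    [/\ inpref Sp Sm w, op = Act Sp Sm ce w, drun d q0 (Enc ce w) = Some q
      & q' \in F].
  move=> q op q' H.
  have [u [[v Hv Hpre] Hu]] := Hii _ _ _ H.
  case: Hv Hpre => [[w' _ ->]|[w' Hw' ->]] Hpre.
    by case: (prefix_enc_inr Hpre).
  case: (prefix_rcons_inv Hpre) => [Hp|/rcons_inj [Eu Eop]].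
    by case: (prefix_enc_inr Hp).
  subst u op; exists w'; split => //.
  have := Hpos (rcons (Enc ce w') (inr (Act Sp Sm ce w')))
                (or_intror (ex_intro2 _ _ w' Hw' erefl)).
  by rewrite /daccepts drun_rcons Hu H.
have C : forall w q op q' a, inpref Sp Sm w -> drun d q0 (Enc ce w) = Some q ->
    d q (inr op) = Some q' -> op.1 = (Act Sp Sm ce w).1 -> op.2 a <> None ->
    (Act Sp Sm ce w).2 a <> None -> op.2 a = (Act Sp Sm ce w).2 a.
  move=> w q op q' a Hw Hq H H1 Ha Hb.
  case: (eqVneq (op.2 a) ((Act Sp Sm ce w).2 a)) => // Hne; exfalso.
  have [w' [Hw' Eop _ HF]] := A _ _ _ H.
  have HN : Shat_neg Sp Sm ce (rcons (Enc ce w) (inr op)).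
    right; exists w, op; split => //; first by exists w'.
    case => [//|/(_ a) [//|[//|E]]].
    by rewrite E eqxx in Hne.
  have := Hneg _ HN.
  by rewrite /daccepts drun_rcons Hq H HF.
have D : forall q a c q', d q (inl (a, c)) = Some q' -> exists x,
    [/\ inpref Sp Sm (rcons x a), drun d q0 (Enc ce x) = Some q & c = sgnb (ce x)].
  move=> q a c q' H.
  have [u [[v Hv Hpre] Hu]] := Hii _ _ _ H.
  case: Hv Hpre => [[w' Hw' ->]|[w' Hw' ->]] Hpre.
    have [x [Eu Ec Hx]] := prefix_enc ce0 Hpre.
    by exists x; split => //; [apply: pref_of Hx (inSp _ Hw') | rewrite -Eu].
  case: (prefix_rcons_inv Hpre) => [Hp|/rcons_inj [_ //]].
  have [x [Eu Ec Hx]] := prefix_enc ce0 Hp.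
  by exists x; split => //; [apply: pref_of Hx Hw' | rewrite -Eu].
split.
- move=> q a c q' H.
  have [x [Hx Hq Ec]] := D _ _ _ _ H.
  exists (Act Sp Sm ce x); split => //.
  + by exists x => //; apply: pref_rc Hx.
  + have [q2 Hq2 Hn] := B x (pref_rc _ _ Hx).
    by rewrite Hq in Hq2; case: Hq2 => ->.
  + by rewrite /Act /= ffunE Hx.
- move=> q a c q' act act' H Hs H1 Hn Ha Hs' H1' Hn' Ha'.
  have [x [Hx Hq Ec]] := D _ _ _ _ H.
  have Hb : (Act Sp Sm ce x).2 a <> None by rewrite /Act /= ffunE Hx.
  case E: (d q (inr act)) Hn => [q2|] // _.
  case E': (d q (inr act')) Hn' => [q3|] // _.
  rewrite (C x q act q2 a (pref_rc _ _ Hx) Hq E) ?H1 //.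
  by rewrite (C x q act' q3 a (pref_rc _ _ Hx) Hq E') ?H1'.
move=> d0 d1 Hdd.
have Ev : forall q a c q' e, (if c then d1 else d0) q a = Some (q', e) ->
    exists w, [/\ inpref Sp Sm (rcons w a), sgnb (ce w) = c &
       e = ((ce (rcons w a))%:Z - (ce w)%:Z)%R].
  move=> q a c q' e He.
  case Eq: (d q (inl (a, c))) => [q2|]; last by rewrite (proj2 (Hdd q a c) Eq) in He.
  have [act [e' [[w Hw Eact] H1 _ H2 H3]]] := (proj1 (Hdd q a c)) _ Eq.
  rewrite He in H3; case: H3 => _ <- in H2.
  subst act.
  have Hr : inpref Sp Sm (rcons w a).
    by move: H2; rewrite /Act /= ffunE; case: (inpref _ _ _).
  move: H2; rewrite /Act /= ffunE Hr => -[<-].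
  by exists w.
have Run : forall w, inpref Sp Sm w -> exists q,
    drun d q0 (Enc ce w) = Some q /\ orun d0 d1 (q0, 0%N) w = Some (q, ce w).
  elim/last_ind => [|w a IH] Hw; first by exists q0; rewrite ce0.
  have Hw' := pref_rc _ _ Hw.
  have [q [Hq Ho]] := IH Hw'.
  have [q2 Hq2 _] := B _ Hw.
  move: Hq2; rewrite enc_rcons // drun_rcons Hq => Hq2.
  have [act [e [Hs Ha1 Hnn Ha2 Hde]]] := (proj1 (Hdd q a (sgnb (ce w)))) _ Hq2.
  case E: (d q (inr act)) Hnn => [q3|] // _.
  have := C w q act q3 a Hw' Hq E.
  rewrite Ha2 /Act /= ffunE Hw => Ee.
  have {Ee} Ee : e = ((ce (rcons w a))%:Z - (ce w)%:Z)%R.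
    have H' : Some e = Some ((ce (rcons w a))%:Z - (ce w)%:Z)%R by apply: Ee.
    by case: H'.
  exists q2; split => //.
  rewrite orun_rcons Ho /=.
  have Hsum : ((ce w)%:Z + e = (ce (rcons w a))%:Z)%R by rewrite Ee addrC subrK.
  move: Hde; rewrite /sgnb; case: (ce w == 0%N) => /= ->; by rewrite Hsum le0z_nat.
split.
- move=> q a q' e H; have [w [Hr Hs ->]] := Ev q a false q' e H.
  have := Hce _ _ Hr; move: Hs; rewrite /sgnb !inE => /negbFE/eqP ->.
  by case/or3P => /eqP E; lia.
- move=> q a q' e H; have [w [Hr Hs ->]] := Ev q a true q' e H.
  have := Hce _ _ Hr; rewrite !inE.
  by case/or3P => ->; rewrite ?orbT.
- move=> w Hw; have [q [_ Ho]] := Run w Hw; by exists q.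
- move=> w Hw; have [q [Hq Ho]] := Run w (inSp _ Hw).
  have := Hpos (Enc ce w) (or_introl (ex_intro2 _ _ w Hw erefl)).
  by rewrite /oaccepts /daccepts Ho Hq.
- move=> w Hw; have [q [Hq Ho]] := Run w (inSm _ Hw).
  have := Hneg (Enc ce w) (or_introl (ex_intro2 _ _ w Hw erefl)).
  by rewrite /oaccepts /daccepts Ho Hq.
Qed.
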